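(* Let $\Lambda=\{\Lambda_\omega\in B(\mathcal H,\mathcal K_\omega):\omega\in\Omega\}$ and $\Theta=\{\Theta_\omega\in B(\mathcal H,\mathcal K_\omega):\omega\in\Omega\}$ be two strongly disjoint continuous $g$-frames for $\mathcal H$ and let $L_1,L_2\in B(\mathcal H)$ with $L_1$ surjective. Let $L_1^\dagger\in B(\mathcal H)$ be a pseudo-inverse of $L_1$, i.e. a bounded operator with $L_1L_1^\dagger=I$. Then $\{\Lambda_\omega S_\Lambda^{-1}L_1^\dagger:\omega\in\Omega\}$ is a dual for both $\{\Lambda_\omega L_1^*:\omega\in\Omega\}$ and $\{\Lambda_\omega L_1^*+\Theta_\omega L_2^*:\omega\in\Omega\}$.
   Context: $\mathcal H$ is a complex Hilbert space, $(\Omega,\mu)$ a measure space with positive measure $\mu$, and $\{\mathcal K_\omega:\omega\in\Omega\}$ a family of complex Hilbert spaces. A map $F$ on $\Omega$ with $F(\omega)\in\mathcal K_\omega$ is strongly measurable if it is measurable as a map $\Omega\to\bigoplus_\omega\mathcal K_\omega$; $\widehat{\mathcal K}$ is the Hilbert space of strongly measurable such $F$ with $\int_\Omega\|F(\omega)\|^2d\mu<\infty$, inner product $\langle F,G\rangle=\int_\Omega\langle F(\omega),G(\omega)\rangle d\mu$. A family $\Lambda=\{\Lambda_\omega\in B(\mathcal H,\mathcal K_\omega)\}$ is a continuous $g$-frame for $\mathcal H$ if $\omega\mapsto\Lambda_\omega f$ is strongly measurable for each $f$ and there are $0<A\le B<\infty$ with $A\|f\|^2\le\int_\Omega\|\Lambda_\omega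 f\|^2d\mu(\omega)\le B\|f\|^2$ for all $f\in\mathcal H$. Its analysis operator $T_\Lambda^*:\mathcal H\to\widehat{\mathcal K}$ is $(T_\Lambda^*f)(\omega)=\Lambda_\omega f$, and its frame operator $S_\Lambda$ is the positive invertible operator with $\langle S_\Lambda f,g\rangle=\int_\Omega\langle f,\Lambda_\omega^*\Lambda_\omega g\rangle d\mu(\omega)$. Two continuous $g$-frames $\Lambda,\Theta$ are strongly disjoint if $\mathrm{Range}\,T_\Lambda^*\perp\mathrm{Range}\,T_\Theta^*$. A continuous $g$-frame $\Theta$ is a dual of a continuous $g$-frame $\Lambda$ if $\langle f,g\rangle=\int_\Omega\langle f,\Theta_\omega^*\Lambda_\omega g\rangle d\mu(\omega)$ for all $f,g\in\mathcal H$. *)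

(* Defs.v *)
From HB Require Import structures.
From mathcomp Require Import all_boot all_order all_algebra.
From mathcomp Require Import all_classical all_reals all_analysis.
From mathcomp Require Import complex.

Set Implicit Arguments.
Unset Strict Implicit.
Unset Printing Implicit Defensive.

Import Order.TTheory GRing.Theory Num.Theory.
Local Open Scope classical_set_scope.
Local Open Scope ring_scope.

Section ContGFrames.
Variable R : realType.
Local Notation C := (R[i]).

Definition ip_norm (V : lmodType C) (ip : V -> V -> C) (x : V) : R :=
  Num.sqrt (complex.Re (ip x x)).

Definition is_hilbert (V : lmodType C) (ip : V -> V -> C) : Prop :=
  [/\ (forall (a : C) (x y z : V), ip (a *: x + y) z = a * ip x z + ip y z),
      (forall x y : V, ip y x = complex.conjc (ip x y)),
      (forall x : V, complex.Im (ip x x) = 0 /\ 0 <= complex.Re (ip x x)),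
      (forall x : V, ip x x = 0 -> x = 0) &
      (forall u : nat -> V,
         (forall e : R, 0 < e -> exists N : nat, forall m n : nat,
              (N <= m)%N -> (N <= n)%N -> ip_norm ip (u m - u n) < e) ->
         exists x : V, forall e : R, 0 < e -> exists N : nat, forall n : nat,
              (N <= n)%N -> ip_norm ip (u n - x) < e)].

Definition bounded_op (V W : lmodType C) (ipV : V -> V -> C) (ipW : W -> W -> C)
  (T : V -> W) : Prop :=
  (forall (a : C) (x y : V), T (a *: x + y) = a *: T x + T y) /\
  exists M : R, forall x : V, ip_norm ipW (T x) <= M * ip_norm ipV x.

Definition is_adjoint (V W : lmodType C) (ipV : V -> V -> C) (ipW : W -> W -> C)
  (T : V -> W) (Ts : W -> V) : Prop :=
  forall (x : V) (y : W), ipW (T x) y = ipV x (Ts y).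

Variables (d : measure_display) (Omega : measurableType d).
Variable mu : {measure set Omega -> \bar R}.

Definition cintegrable (F : Omega -> C) : Prop :=
  mu.-integrable setT (fun w => (complex.Re (F w))%:E) /\
  mu.-integrable setT (fun w => (complex.Im (F w))%:E).

Definition cintegral (F : Omega -> C) : C :=
  Complex (Rintegral mu setT (fun w => complex.Re (F w)))
          (Rintegral mu setT (fun w => complex.Im (F w))).

Variable K : Omega -> lmodType C.
Variable ipK : forall w, K w -> K w -> C.

Definition dnorm2 (x : forall w, K w) : \bar R :=
  \esum_(w in [set: Omega]) ((ip_norm (@ipK w) (x w)) ^+ 2)%:E.

(* the carrier of the Hilbert direct sum *)
Definition dsum_set : set (forall w, K w) := [set x | dnorm2 x < +oo]%E.

Definition dsum_open (U : set (forall w, K w)) : Prop :=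
  U `<=` dsum_set /\
  forall x, U x -> exists r : R, 0 < r /\
    forall y, dsum_set y -> (dnorm2 (fun w => (y w - x w)%R) < (r ^+ 2)%:E)%E -> U y.

Definition dsum_borel : set (set (forall w, K w)) :=
  smallest (sigma_algebra dsum_set) dsum_open.

Definition dinj (w : Omega) (v : K w) : forall w', K w' :=
  fun w' => match pselect (w = w') with
            | left e => eq_rect w K v w' e
            | right _ => 0
            end.

(* F with F w in K_w is strongly measurable: measurable as a map
   Omega -> (+)_w K_w *)
Definition strongly_measurable (F : forall w, K w) : Prop :=
  forall B, dsum_borel B -> measurable [set w | B (dinj (F w))].

Variable H : lmodType C.
Variable ip : H -> H -> C.

Definition cgframe (L : forall w, H -> K w) : Prop :=
  [/\ (forall w, bounded_op ip (@ipK w) (L w)),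
      (forall f : H, strongly_measurable (fun w => L w f)) &
      exists A B : R, [/\ 0 < A, A <= B &
        forall f : H,
          ((A * ip_norm ip f ^+ 2)%:E
             <= \int[mu]_w ((ip_norm (@ipK w) (L w f)) ^+ 2)%:E)%E /\
          (\int[mu]_w ((ip_norm (@ipK w) (L w f)) ^+ 2)%:E
             <= (B * ip_norm ip f ^+ 2)%:E)%E]].

Definition khat_ip (F G : forall w, K w) : C :=
  cintegral (fun w => ipK (F w) (G w)).

(* strongly disjoint: Range T_L^* is orthogonal to Range T_T^* in \hat K *)
Definition strongly_disjoint (L T : forall w, H -> K w) : Prop :=
  forall f g : H, khat_ip (fun w => L w f) (fun w => T w g) = 0.

Definition frame_operator (L : forall w, H -> K w) (S : H -> H) : Prop :=
  bounded_op ip ip S /\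
  forall Ls : forall w, K w -> H, (forall w, is_adjoint ip (@ipK w) (L w) (Ls w)) ->
  forall f g : H, ip (S f) g = cintegral (fun w => ip f (Ls w (L w g))).

Definition cg_dual (T L : forall w, H -> K w) : Prop :=
  [/\ cgframe T, cgframe L &
      forall Ts : forall w, K w -> H, (forall w, is_adjoint ip (@ipK w) (T w) (Ts w)) ->
      forall f g : H, cintegrable (fun w => ip f (Ts w (L w g))) /\
                      ip f g = cintegral (fun w => ip f (Ts w (L w g)))].

End ContGFrames.

(* Main.v *)
Require Import Defs.
From HB Require Import structures.
From mathcomp Require Import all_boot all_order all_algebra.
From mathcomp Require Import all_classical all_reals all_analysis.
From mathcomp Require Import complex.
From mathcomp Require Import ring lra.
From mathcomp Require Import measurable_realfun.
Import GRing.Theory Num.Theory.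
Local Open Scope ring_scope.

Module Helpers.
Local Open Scope complex_scope.
Local Open Scope classical_set_scope.
Local Open Scope ring_scope.
Set Implicit Arguments.
Unset Strict Implicit.
Import Order.TTheory.

Section CArith.
Variable R : realType.
Local Notation C := R[i].
Lemma cReM (x y : C) : complex.Re (x * y) = complex.Re x * complex.Re y - complex.Im x * complex.Im y.
Proof. by case: x => a b; case: y => c e. Qed.
Lemma cImM (x y : C) : complex.Im (x * y) = complex.Re x * complex.Im y + complex.Im x * complex.Re y.
Proof. by case: x => a b; case: y => c e. Qed.
Lemma cReD (x y : C) : complex.Re (x + y) = complex.Re x + complex.Re y.
Proof. by case: x => a b; case: y => c e. Qed.
Lemma cImD (x y : C) : complex.Im (x + y) = complex.Im x + complex.Im y.
Proof. by case: x => a b; case: y => c e. Qed.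
Lemma cReN (x : C) : complex.Re (- x) = - complex.Re x.
Proof. by case: x => a b. Qed.
Lemma cImN (x : C) : complex.Im (- x) = - complex.Im x.
Proof. by case: x => a b. Qed.
Lemma cReB (x y : C) : complex.Re (x - y) = complex.Re x - complex.Re y.
Proof. by rewrite cReD cReN. Qed.
Lemma cImB (x y : C) : complex.Im (x - y) = complex.Im x - complex.Im y.
Proof. by rewrite cImD cImN. Qed.
Lemma cReJ (x : C) : complex.Re (complex.conjc x) = complex.Re x.
Proof. by case: x. Qed.
Lemma cImJ (x : C) : complex.Im (complex.conjc x) = - complex.Im x.
Proof. by case: x. Qed.
Lemma cRe0 : complex.Re (0 : C) = 0. Proof. by []. Qed.
Lemma cIm0 : complex.Im (0 : C) = 0. Proof. by []. Qed.
Lemma cRe1 : complex.Re (1 : C) = 1. Proof. by []. Qed.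
Lemma cIm1 : complex.Im (1 : C) = 0. Proof. by []. Qed.
Lemma cReR (r : R) : complex.Re (r%:C : C) = r. Proof. by []. Qed.
Lemma cImR (r : R) : complex.Im (r%:C : C) = 0. Proof. by []. Qed.
Lemma cReI : complex.Re ('i%C : C) = 0. Proof. by []. Qed.
Lemma cImI : complex.Im ('i%C : C) = 1. Proof. by []. Qed.
Lemma ceqP (x y : C) : complex.Re x = complex.Re y -> complex.Im x = complex.Im y -> x = y.
Proof. by case: x => a b; case: y => c e /= -> ->. Qed.
Lemma cJJ (x : C) : complex.conjc (complex.conjc x) = x.
Proof. by case: x => a b /=; rewrite opprK. Qed.
Lemma cJM (x y : C) : complex.conjc (x * y) = complex.conjc x * complex.conjc y.
Proof. by apply: ceqP; rewrite ?cReJ ?cImJ ?cReM ?cImM ?cReJ ?cImJ; lra. Qed.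
Lemma cJD (x y : C) : complex.conjc (x + y) = complex.conjc x + complex.conjc y.
Proof. by apply: ceqP; rewrite ?cReJ ?cImJ ?cReD ?cImD ?cReJ ?cImJ; lra. Qed.
End CArith.

Definition cE := (cReM, cImM, cReD, cImD, cReN, cImN, cReB, cImB, cReJ, cImJ,
  cRe0, cIm0, cRe1, cIm1, cReR, cImR, cReI, cImI).

Section Hilb.
Variable R : realType.
Local Notation C := R[i].
Variables (V : lmodType C) (ip : V -> V -> C).
Hypothesis hV : is_hilbert ip.

Definition n2 (x : V) : R := complex.Re (ip x x).

Lemma ip_lin a x y z : ip (a *: x + y) z = a * ip x z + ip y z.
Proof. by case: hV. Qed.
Lemma ipC x y : ip y x = complex.conjc (ip x y).
Proof. by case: hV. Qed.
Lemma ip0l z : ip 0 z = 0.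
Proof.
have := ip_lin 1 0 0 z; rewrite scale1r addr0 mul1r => h.
have : ip 0 z + ip 0 z - ip 0 z = ip 0 z - ip 0 z by rewrite -h.
by rewrite addrK subrr.
Qed.
Lemma ipDl x y z : ip (x + y) z = ip x z + ip y z.
Proof. by have := ip_lin 1 x y z; rewrite scale1r mul1r. Qed.
Lemma ipZl a x z : ip (a *: x) z = a * ip x z.
Proof. by rewrite -[a *: x]addr0 ip_lin ip0l addr0. Qed.
Lemma ipNl x z : ip (- x) z = - ip x z.
Proof. by rewrite -scaleN1r ipZl mulN1r. Qed.
Lemma ipBl x y z : ip (x - y) z = ip x z - ip y z.
Proof. by rewrite ipDl ipNl. Qed.
Lemma ip0r z : ip z 0 = 0.
Proof. by rewrite ipC ip0l; apply: ceqP; rewrite !cE ?oppr0. Qed.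
Lemma ipDr x y z : ip z (x + y) = ip z x + ip z y.
Proof. by rewrite ipC ipDl cJD -!ipC. Qed.
Lemma ipZr a x z : ip z (a *: x) = complex.conjc a * ip z x.
Proof. by rewrite ipC ipZl cJM -ipC. Qed.
Lemma ipNr x z : ip z (- x) = - ip z x.
Proof. by rewrite -scaleN1r ipZr; apply: ceqP; rewrite !cE; lra. Qed.
Lemma ipBr x y z : ip z (x - y) = ip z x - ip z y.
Proof. by rewrite ipDr ipNr. Qed.

Lemma ipxx_Im x : complex.Im (ip x x) = 0.
Proof. by case: hV => _ _ h _ _; case: (h x). Qed.
Lemma n2_ge0 x : 0 <= n2 x.
Proof. by case: hV => _ _ h _ _; case: (h x). Qed.
Lemma ipxx x : ip x x = (n2 x)%:C.
Proof. by apply: ceqP; rewrite ?cE // ipxx_Im. Qed.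
Lemma n2_eq0 x : n2 x = 0 -> x = 0.
Proof. by case: hV => _ _ _ h _ e; apply: h; rewrite ipxx e. Qed.
Lemma ip_norm_ge0 x : 0 <= ip_norm ip x.
Proof. exact: sqrtr_ge0. Qed.
Lemma ip_norm_sq x : ip_norm ip x ^+ 2 = n2 x.
Proof. by rewrite /ip_norm sqr_sqrtr // n2_ge0. Qed.
Lemma n2_0 : n2 0 = 0.
Proof. by rewrite /n2 ip0l. Qed.
Lemma ip_norm0 : ip_norm ip 0 = 0.
Proof. by rewrite /ip_norm -/(n2 0) n2_0 sqrtr0. Qed.

Lemma n2D x y : n2 (x + y) = n2 x + n2 y + 2 * complex.Re (ip x y).
Proof.
rewrite /n2 ipDl !ipDr (ipC x y) !cE; lra.
Qed.
Lemma n2Z a x : n2 (a *: x) = (complex.Re a ^+ 2 + complex.Im a ^+ 2) * n2 x.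
Proof.
rewrite /n2 ipZl ipZr ipxx !cE; lra.
Qed.
Lemma n2N x : n2 (- x) = n2 x.
Proof. by rewrite /n2 ipNl ipNr opprK. Qed.

Lemma CS_Re_sq x y : complex.Re (ip x y) ^+ 2 <= n2 x * n2 y.
Proof.
have [y0|ny0] := eqVneq (n2 y) 0.
  by rewrite y0 mulr0 (n2_eq0 y0) ip0r cRe0 expr0n.
have yp : 0 < n2 y by rewrite lt_neqAle eq_sym ny0 n2_ge0.
set b := complex.Re (ip x y).
have := n2_ge0 (x + (- (b / n2 y))%:C *: y).
rewrite n2D n2Z ipZr !cE => h.
have e : (- (b / n2 y)) ^+ 2 * n2 y + 2 * (- (b / n2 y) * b) = - (b ^+ 2 / n2 y).
  by field; rewrite ny0.
have : 0 <= n2 x - b ^+ 2 / n2 y.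
  move: h; rewrite -/b expr0n /= addr0 oppr0 mul0r subr0 -addrA e //.
by rewrite subr_ge0 ler_pdivrMr // mulrC.
Qed.

Lemma CS_Re x y : complex.Re (ip x y) <= ip_norm ip x * ip_norm ip y.
Proof.
have [b0|b0] := lerP (complex.Re (ip x y)) 0.
  exact: le_trans b0 (mulr_ge0 (ip_norm_ge0 _) (ip_norm_ge0 _)).
rewrite -(@ler_pXn2r _ 2) ?nnegrE ?mulr_ge0 ?ip_norm_ge0 //; last exact: ltW.
by rewrite exprMn !ip_norm_sq; apply: CS_Re_sq.
Qed.

Lemma ip_normZ a x : ip_norm ip (a *: x) = Num.sqrt (complex.Re a ^+ 2 + complex.Im a ^+ 2) * ip_norm ip x.
Proof. by rewrite /ip_norm -/(n2 _) n2Z sqrtrM // addr_ge0 // sqr_ge0. Qed.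
Lemma ip_normN x : ip_norm ip (- x) = ip_norm ip x.
Proof. by rewrite /ip_norm -!/(n2 _) n2N. Qed.

Lemma CS_absRe x y : `|complex.Re (ip x y)| <= ip_norm ip x * ip_norm ip y.
Proof.
rewrite ler_norml CS_Re andbT lerNl -cReN -ipNl.
by rewrite -(ip_normN x) CS_Re.
Qed.

Lemma Im_ip x y : complex.Im (ip x y) = complex.Re (ip x ('i%C *: y)).
Proof. by rewrite ipZr !cE; lra. Qed.

Lemma ip_normI y : ip_norm ip ('i%C *: y) = ip_norm ip y.
Proof. by rewrite ip_normZ !cE expr0n /= add0r expr1n sqrtr1 mul1r. Qed.

Lemma CS_absIm x y : `|complex.Im (ip x y)| <= ip_norm ip x * ip_norm ip y.
Proof. by rewrite Im_ip -(ip_normI y) CS_absRe. Qed.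

Lemma ip_normD x y : ip_norm ip (x + y) <= ip_norm ip x + ip_norm ip y.
Proof.
rewrite -(@ler_pXn2r _ 2) // ?nnegrE ?addr_ge0 ?ip_norm_ge0 //.
rewrite ip_norm_sq n2D sqrrD !ip_norm_sq.
have := CS_Re x y; lra.
Qed.

Lemma Re_ip_half x y : `|complex.Re (ip x y)| <= (n2 x + n2 y) / 2.
Proof.
apply: le_trans (CS_absRe x y) _.
rewrite -!ip_norm_sq.
have := ip_norm_ge0 x; have := ip_norm_ge0 y.
set a := ip_norm ip x; set b := ip_norm ip y => ha hb.
have : 0 <= (a - b) ^+ 2 by rewrite sqr_ge0.
rewrite sqrrB; lra.
Qed.
Lemma Im_ip_half x y : `|complex.Im (ip x y)| <= (n2 x + n2 y) / 2.
Proof.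
apply: le_trans (CS_absIm x y) _.
rewrite -!ip_norm_sq.
have := ip_norm_ge0 x; have := ip_norm_ge0 y.
set a := ip_norm ip x; set b := ip_norm ip y => ha hb.
have : 0 <= (a - b) ^+ 2 by rewrite sqr_ge0.
rewrite sqrrB; lra.
Qed.

Lemma ip_inj u v : (forall x, ip x u = ip x v) -> u = v.
Proof.
move=> h; apply/eqP; rewrite -subr_eq0; apply/eqP; apply: n2_eq0.
by rewrite /n2 ipBr h subrr cRe0.
Qed.

End Hilb.

Lemma archi_inv (R : realType) (e : R) : 0 < e ->
  exists N : nat, forall n, (N <= n)%N -> n.+1%:R^-1 < e.
Proof.
move=> e0; exists (Num.truncn e^-1) => n hn.
rewrite invf_plt ?posrE ?ltr0n //.
apply: lt_le_trans (archimedean.Num.Theory.truncnS_gt _) _.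
by rewrite ler_nat ltnS.
Qed.

Lemma abs_le_eps (R : realType) (t : R) : (forall e, 0 < e -> `|t| <= e) -> t = 0.
Proof.
move=> h; apply/eqP; rewrite -normr_le0; apply/ler_addgt0Pr => e e0.
by rewrite add0r; apply: h.
Qed.

Lemma sq_lt (R : realType) (a e : R) : 0 <= a -> 0 < e -> a ^+ 2 < e ^+ 2 -> a < e.
Proof.
move=> a0 e0 h; rewrite ltNge; apply/negP => hle.
have : e ^+ 2 <= a ^+ 2 by rewrite lerXn2r ?nnegrE // ltW.
by rewrite leNgt h.
Qed.

Section Riesz.
Variable R : realType.
Local Notation C := R[i].
Variables (V : lmodType C) (ip : V -> V -> C).
Hypothesis hV : is_hilbert ip.
Local Notation nrm := (ip_norm ip).
Local Notation n2 := (n2 ip).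

Lemma riesz (phi : V -> C) (c : R) :
  (forall a x y, phi (a *: x + y) = a * phi x + phi y) ->
  (forall x, complex.Re (phi x) <= c * nrm x) ->
  exists z, forall x, phi x = ip x z.
Proof.
move=> hlin hb.
have phi0 : phi 0 = 0.
  have := hlin 1 0 0; rewrite scale1r addr0 mul1r => h.
  have : phi 0 + phi 0 - phi 0 = phi 0 - phi 0 by rewrite -h.
  by rewrite addrK subrr.
have phiZ a x : phi (a *: x) = a * phi x.
  by rewrite -[a *: x]addr0 hlin phi0 addr0.
have phiD x y : phi (x + y) = phi x + phi y.
  by have := hlin 1 x y; rewrite scale1r mul1r.
have phiN x : phi (- x) = - phi x.
  by rewrite -scaleN1r phiZ mulN1r.
have phiB x y : phi (x - y) = phi x - phi y by rewrite phiD phiN.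
have hRe v : `|complex.Re (phi v)| <= `|c| * nrm v.
  rewrite ler_norml; apply/andP; split.
    rewrite lerNl -cReN -phiN; apply: le_trans (hb _) _.
    by rewrite (ip_normN hV) ler_wpM2r ?ip_norm_ge0 // ler_norm.
  by apply: le_trans (hb _) _; rewrite ler_wpM2r ?ip_norm_ge0 // ler_norm.
have hIm v : `|complex.Im (phi v)| <= `|c| * nrm v.
  have -> : complex.Im (phi v) = complex.Re (phi ((- 'i%C) *: v)).
    by rewrite phiZ !cE; lra.
  apply: le_trans (hRe _) _.
  by rewrite (ip_normZ hV) !cE oppr0 expr0n /= add0r sqrrN expr1n sqrtr1 mul1r.
case: (pselect (forall x, phi x = 0)) => [h0|].
  by exists 0 => x; rewrite h0 (ip0r hV).
move=> /existsNP [x0 hx0].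
set u0 := (phi x0)^-1 *: x0.
have hu0 : phi u0 = 1 by rewrite phiZ mulVf //; apply/eqP.
set E := [set r | exists x, phi x = 1 /\ r = n2 x].
have hlb : lbound E 0 by move=> r [x [_ ->]]; exact: n2_ge0.
have hne : nonempty E by exists (n2 u0); exists u0.
have hE : has_inf E by split => //; exists 0.
set d := inf E.
have d0 : 0 <= d by apply: lb_le_inf.
have dle x : phi x = 1 -> d <= n2 x.
  by move=> hx; apply: (ge_inf hE.2); exists x.
have hu : forall n : nat, exists x, phi x = 1 /\ n2 x < d + n.+1%:R^-1.
  move=> n; have hpos : 0 < (n.+1%:R : R)^-1 by rewrite invr_gt0 ltr0n.
  have [r [x [hx ->]] hr] := inf_adherent hpos hE.
  by exists x.
have [u hu'] := choice hu.
have hCa m n : n2 (u m - u n) <= 2 * m.+1%:R^-1 + 2 * n.+1%:R^-1.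
  have [hm1 hm2] := hu' m; have [hn1 hn2] := hu' n.
  set w := (2^-1)%:C *: (u m + u n).
  have hw : phi w = 1.
    rewrite phiZ phiD hm1 hn1; apply: ceqP; rewrite !cE; lra.
  have := dle _ hw; rewrite /w (n2Z hV) (n2D hV) (n2D hV (u m)) (ipNr hV) (n2N hV) !cE.
  have -> : (2^-1 ^+ 2 + 0 ^+ 2 : R) = 4^-1 by field.
  rewrite mulrC ler_pdivlMr //.
  move: hm2 hn2.
  move: (m.+1%:R^-1) (n.+1%:R^-1) => a b; lra.
have hcauchy : forall e : R, 0 < e -> exists N : nat, forall m n : nat,
    (N <= m)%N -> (N <= n)%N -> nrm (u m - u n) < e.
  move=> e e0.
  have e2 : 0 < e ^+ 2 / 4 by rewrite divr_gt0 // exprn_gt0.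
  have [N hN] := archi_inv e2.
  exists N => m n hm hn; apply: sq_lt; rewrite ?ip_norm_ge0 //.
  rewrite (ip_norm_sq hV); apply: le_lt_trans (hCa m n) _.
  have := hN _ hm; have := hN _ hn.
  move: (m.+1%:R^-1) (n.+1%:R^-1) (e ^+ 2) => a b E'; lra.
have [z0 hz0] := (match hV with And5 _ _ _ _ h => h end) u hcauchy.
have phiz0 : phi z0 = 1.
  have key (e : R) : 0 < e -> `|complex.Re (phi z0 - 1)| <= e /\ `|complex.Im (phi z0 - 1)| <= e.
    move=> e0.
    have e1 : 0 < e / (`|c| + 1) by rewrite divr_gt0 // ltr_wpDl.
    have [N hN] := hz0 _ e1.
    have h1 : phi z0 - 1 = - phi (u N - z0) by rewrite phiB (hu' N).1 opprB.
    have hN' := hN N (leqnn N).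
    have hle : `|c| * nrm (u N - z0) <= e.
      apply: le_trans (_ : `|c| * (e / (`|c| + 1)) <= e).
        by rewrite ler_wpM2l // ltW.
      rewrite mulrA ler_pdivrMr ?ltr_wpDl //; nra.
    rewrite h1 cReN cImN !normrN; split; apply: le_trans hle; [exact: hRe | exact: hIm].
  apply: ceqP.
  - apply/eqP; rewrite -subr_eq0 -cReB; apply/eqP; apply: abs_le_eps => e e0.
    by have [h _] := key e e0.
  - apply/eqP; rewrite -subr_eq0 -cImB; apply/eqP; apply: abs_le_eps => e e0.
    by have [_ h] := key e e0.
have n2z0 : n2 z0 <= d.
  apply/ler_addgt0Pr => e e0.
  set M := d + 2.
  have M0 : 0 <= M by rewrite /M; lra.
  have e1 : 0 < Num.min 1 (e / (3 * (1 + 2 * M))).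
    by rewrite lt_min ltr01 /= divr_gt0 //; nra.
  have [N1 hN1] := hz0 _ e1.
  have e3 : 0 < e / 3 by rewrite divr_gt0.
  have [N2 hN2] := archi_inv e3.
  set n := maxn N1 N2.
  have hd := hN1 n (leq_maxl _ _).
  have hn := hN2 n (leq_maxr _ _).
  have [_ hun] := hu' n.
  have hun_le : nrm (u n) <= M.
    have := @ip_norm_ge0 _ _ ip (u n); have := ip_norm_sq hV (u n).
    have : n.+1%:R^-1 <= (1 : R) by rewrite invf_le1 // ler1n.
    move: hun; rewrite /M; move: (n.+1%:R^-1) (nrm (u n)) (n2 (u n)) => q a b.
    move=> h1 h2 h3 h4; rewrite -h3 in h1.
    have : a <= 1 \/ 1 <= a by case: (lerP a 1) => h; [left|right; exact: ltW].
    case=> h5; nra.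
  have -> : z0 = u n + (- (u n - z0)) by rewrite opprB addrC subrK.
  rewrite (n2D hV) (n2N hV) -(ip_norm_sq hV (u n - z0)).
  have hcs := CS_absRe hV (u n) (- (u n - z0)).
  rewrite (ip_normN hV) in hcs.
  have := @ip_norm_ge0 _ _ ip (u n - z0).
  have := @ip_norm_ge0 _ _ ip (u n).
  move: hd; rewrite lt_min => /andP[hd1 hd2].
  set t := nrm (u n - z0) in hd1 hd2 hcs *.
  have ht : t * (3 * (1 + 2 * M)) < e by rewrite -ltr_pdivlMr //; nra.
  move: hcs; rewrite ler_norml => /andP[_ hcs].
  move=> h1 h2.
  have : nrm (u n) * t <= M * t by rewrite ler_wpM2r.
  have : t ^+ 2 <= t by rewrite expr2; nra.
  move: hn hun hcs ht; move: (n.+1%:R^-1) => q.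
  lra.
have orth v : phi v = 0 -> ip z0 v = 0.
  move=> hv.
  set s := (n2 v + 1)^-1.
  have s0 : 0 < s by rewrite invr_gt0; have := n2_ge0 hV v; lra.
  have hs : s * n2 v <= 1.
    rewrite /s mulrC ler_pdivrMr; first lra.
    by have := n2_ge0 hV v; lra.
  set a := - (s%:C * ip z0 v).
  have ha : phi (z0 + a *: v) = 1 by rewrite phiD phiZ hv mulr0 addr0.
  suff [p0 q0] : complex.Re (ip z0 v) = 0 /\ complex.Im (ip z0 v) = 0.
    by apply: ceqP; rewrite ?cE.
  have := le_trans n2z0 (dle _ ha).
  rewrite (n2D hV) (n2Z hV) (ipZr hV) /a !cE.
  have := n2_ge0 hV v.
  move: (complex.Re (ip z0 v)) (complex.Im (ip z0 v)) (n2 v) (n2 z0) hs s0 => p q N Z hs s0 hN.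
  rewrite !mul0r !subr0 !addr0 ?subr0 ?opprK; move=> h.
  have hPP : 0 <= s * (p ^+ 2 + q ^+ 2) by rewrite mulr_ge0 ?addr_ge0 ?sqr_ge0 // ltW.
  have hm : s * (p ^+ 2 + q ^+ 2) * (s * N) <= s * (p ^+ 2 + q ^+ 2) by rewrite ler_piMr.
  have hP : s * (p ^+ 2 + q ^+ 2) <= 0 by move: h hm; rewrite !sqrrN; nra.
  have hp : p ^+ 2 + q ^+ 2 <= 0 by rewrite -(pmulr_rle0 _ s0).
  have p0 : p = 0 by nra.
  have q0 : q = 0 by nra.
  by [].
have nz : n2 z0 != 0.
  apply/eqP => h; move: phiz0; rewrite (n2_eq0 hV h) phi0; move=> /eqP.
  by rewrite eq_sym oner_eq0.
exists (((n2 z0)^-1)%:C *: z0); move=> x.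
have hv : phi (x - phi x *: z0) = 0 by rewrite phiB phiZ phiz0 mulr1 subrr.
have := orth _ hv; rewrite (ipBr hV) (ipZr hV) (ipxx hV); move=> /eqP; rewrite subr_eq0; move=> /eqP hx.
have hx' : ip x z0 = phi x * (n2 z0)%:C.
  by rewrite (ipC hV) hx cJM cJJ; apply: ceqP; rewrite !cE; lra.
rewrite (ipZr hV) hx'; apply: ceqP; rewrite !cE.
  by field.
by field.
Qed.
End Riesz.

Section Meas.
Variables (R : realType) (d : measure_display) (Omega : measurableType d).
Local Notation C := R[i].
Variable K : Omega -> lmodType C.
Variable ipK : forall w, K w -> K w -> C.
Hypothesis hK : forall w, is_hilbert (@ipK w).

Lemma dinj_self w (v : K w) : dinj v w = v.
Proof.
rewrite /dinj; case: pselect => [e|]; last by [].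
by rewrite (Prop_irrelevance e erefl).
Qed.

Lemma dinj_other w w' (v : K w) : w <> w' -> dinj v w' = 0.
Proof. by rewrite /dinj; case: pselect. Qed.

Lemma dinj0 w : dinj (0 : K w) = (fun w' => 0).
Proof.
apply: functional_extensionality_dep => w'.
by rewrite /dinj; case: pselect => // e; case: w' / e.
Qed.

Lemma dnorm2_dinj w (v : K w) :
  dnorm2 ipK (dinj v) = ((ip_norm (@ipK w) v) ^+ 2)%:E.
Proof.
rewrite /dnorm2.
have -> : \esum_(w' in [set: Omega]) ((ip_norm (@ipK w') (dinj v w')) ^+ 2)%:E
   = \esum_(w' in [set: Omega]) (if w' \in [set w] then
        ((ip_norm (@ipK w') (dinj v w')) ^+ 2)%:E else 0%E).
  apply: eq_esum => w' _; case: ifPn => // /negP hw.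
  rewrite dinj_other ?ip_norm0 ?expr0n //.
  by move=> e; apply: hw; rewrite inE e.
rewrite -esum_mkcond esum_set1 ?dinj_self //.
by rewrite lee_fin sqr_ge0.
Qed.

Lemma dsum_dinj w (v : K w) : dsum_set ipK (dinj v).
Proof. by rewrite /dsum_set /= dnorm2_dinj ltry. Qed.

Lemma term_le_dnorm2 (x : forall w, K w) w :
  (((ip_norm (@ipK w) (x w)) ^+ 2)%:E <= dnorm2 ipK x)%E.
Proof.
rewrite /dnorm2; apply: esum_ge; exists [set w].
  by split; [exact: finite_set1 | by []].
by rewrite fsbig_set1.
Qed.

Definition supp (F : forall w, K w) : set Omega := [set w | F w != 0].

Lemma sm_subsets (F : forall w, K w) : strongly_measurable ipK F ->
  forall E, E `<=` supp F -> measurable E.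
Proof.
move=> hF E hE.
pose U := [set y : forall w, K w | dsum_set ipK y /\ exists w, E w /\
   n2 (@ipK w) (F w) / 2 < complex.Re (ipK (y w) (F w))].
have hU : dsum_open ipK U.
  split; first by move=> y [].
  move=> x [xs [w [Ew hw]]].
  set nf := ip_norm (@ipK w) (F w).
  set del := complex.Re (ipK (x w) (F w)) - n2 (@ipK w) (F w) / 2.
  have del0 : 0 < del by rewrite /del subr_gt0.
  have nf0 : 0 <= nf by exact: ip_norm_ge0.
  exists (del / (nf + 1)); split; first by rewrite divr_gt0 // ltr_wpDl.
  move=> y ys hy; split => //; exists w; split => //.
  have hyx : ip_norm (@ipK w) (y w - x w) < del / (nf + 1).
    apply: sq_lt; [exact: ip_norm_ge0 | by rewrite divr_gt0 // ltr_wpDl |].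
    rewrite -lte_fin; apply: le_lt_trans hy.
    exact: (term_le_dnorm2 (fun w => y w - x w) w).
  have hcs := CS_absRe (hK w) (y w - x w) (F w).
  rewrite (ipBl (hK w)) cReB ler_norml in hcs.
  move/andP: hcs => [hcs _].
  have : ip_norm (@ipK w) (y w - x w) * nf <= del / (nf + 1) * nf.
    by rewrite ler_wpM2r // ltW.
  have : del / (nf + 1) * nf < del.
    rewrite mulrAC ltr_pdivrMr ?ltr_wpDl //; nra.
  rewrite /del in del0 *; rewrite -/nf in hcs.
  lra.
have hB : dsum_borel ipK U by move=> A [_ GA]; exact: GA.
have := hF U hB.
suff -> : [set w | U (dinj (F w))] = E by [].
apply/funext => w; apply/propext; split.
  move=> [_ [w' [Ew' h]]].
  have [e|ne] := pselect (w = w'); first by rewrite e.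
  move: h; rewrite dinj_other // (ip0l (hK w')) cRe0.
  have := n2_ge0 (hK w') (F w'); lra.
move=> Ew; split; first exact: dsum_dinj.
exists w; split => //; rewrite dinj_self -/(n2 (@ipK w) (F w)).
have : n2 (@ipK w) (F w) != 0.
  apply/eqP => h; move: (hE w Ew); rewrite /supp /= (n2_eq0 (hK w) h).
  by rewrite eqxx.
have := n2_ge0 (hK w) (F w).
move: (n2 (@ipK w) (F w)) => t h1 h2.
have : 0 < t by rewrite lt_neqAle eq_sym h2 h1.
lra.
Qed.

Lemma subsetsU (Z1 Z2 : set Omega) :
  (forall E, E `<=` Z1 -> measurable E) -> (forall E, E `<=` Z2 -> measurable E) ->
  forall E, E `<=` Z1 `|` Z2 -> measurable E.
Proof.
move=> h1 h2 E hE.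
have -> : E = (E `&` Z1) `|` (E `&` Z2).
  apply/funext => w; apply/propext; split.
    by move=> Ew; case: (hE w Ew) => h; [left|right].
  by case=> -[].
by apply: measurableU; [apply: h1; exact: subIsetr | apply: h2; exact: subIsetr].
Qed.

Lemma set_supp (Z : set Omega) (hZ : forall E, E `<=` Z -> measurable E)
  (P : set Omega) (b : Prop) : (forall w, ~ Z w -> (P w <-> b)) -> measurable P.
Proof.
move=> hP; have [hb|hb] := pselect b.
  have -> : P = (P `&` Z) `|` ~` Z.
    apply/funext => w; apply/propext; split.
      by move=> Pw; have [Zw|Zw] := pselect (Z w); [left|right].
    by case=> [[]//|Zw]; apply/(hP _ Zw).
  apply: measurableU; first by apply: hZ; exact: subIsetr.
  by apply: measurableC; apply: hZ.
have -> : P = P `&` Z.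
  apply/funext => w; apply/propext; split; last by case.
  move=> Pw; split => //; apply/not_notP => Zw.
  by apply: hb; apply/(hP _ Zw).
by apply: hZ; exact: subIsetr.
Qed.

Lemma mfun_supp (Z : set Omega) (hZ : forall E, E `<=` Z -> measurable E)
  (d' : measure_display) (T' : measurableType d') (g : Omega -> T') (c : T') :
  (forall w, ~ Z w -> g w = c) -> measurable_fun setT g.
Proof.
move=> hg _ B mB; rewrite setTI.
apply: (@set_supp Z hZ _ (B c)) => w Zw.
by rewrite /preimage /= hg.
Qed.

Lemma sm_add (F G : forall w, K w) : strongly_measurable ipK F ->
  strongly_measurable ipK G -> strongly_measurable ipK (fun w => F w + G w).
Proof.
move=> hF hG B hB.
apply: (@set_supp (supp F `|` supp G) (subsetsU (sm_subsets hF) (sm_subsets hG))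
  _ (B (fun w' => 0))).
move=> w hw.
have F0 : F w = 0 by apply/eqP; apply/negPn/negP => h; apply: hw; left.
have G0 : G w = 0 by apply/eqP; apply/negPn/negP => h; apply: hw; right.
by rewrite /= F0 G0 addr0 dinj0.
Qed.

End Meas.

Section Integ.
Variables (R : realType) (d : measure_display) (Omega : measurableType d).
Variable mu : {measure set Omega -> \bar R}.
Local Notation C := R[i].
Variable K : Omega -> lmodType C.
Variable ipK : forall w, K w -> K w -> C.
Hypothesis hK : forall w, is_hilbert (@ipK w).

Implicit Types f g : Omega -> R.

Definition Rint (f : Omega -> R) := mu.-integrable setT (EFin \o f).

Lemma int_eq_R f : Rint f ->
  (\int[mu]_w (f w)%:E = (Rintegral mu setT f)%:E)%E.
Proof. by move=> hf; rewrite /Rintegral fineK // integrable_fin_num. Qed.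

Lemma Rint_add f g : Rint f -> Rint g -> Rint (fun w => f w + g w).
Proof.
move=> hf hg; have := integrableD measurableT hf hg.
by apply: eq_integrable => // w _; rewrite /= EFinD.
Qed.

Lemma Rint_scale k f : Rint f -> Rint (fun w => k * f w).
Proof.
move=> hf; have := integrableZl measurableT k hf.
by apply: eq_integrable => // w _; rewrite /= EFinM.
Qed.

Lemma int_le f g : measurable_fun setT f -> Rint g ->
  (forall w, `|f w| <= g w) -> Rint f.
Proof.
move=> mf hg hfg; apply: le_integrable hg => //.
  by apply/measurable_EFinP.
move=> w _ /=; rewrite lee_fin; apply: le_trans (hfg w) _.
exact: ler_norm.
Qed.

Lemma int_n2 (F : forall w, K w) : strongly_measurable ipK F ->
  (\int[mu]_w ((ip_norm (@ipK w) (F w)) ^+ 2)%:E < +oo)%E ->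
  Rint (fun w => n2 (@ipK w) (F w)).
Proof.
move=> hF hfin; apply/integrableP; split.
  apply: (mfun_supp (sm_subsets hK hF)) (0%:E) _ => w hw.
  have F0 : F w = 0 by apply/eqP; apply/negPn/negP.
  by rewrite /= F0 /n2 (ip0l (hK w)).
apply: le_lt_trans hfin; rewrite le_eqVlt; apply/orP; left; apply/eqP.
apply: eq_integral => w _.
by rewrite /= ger0_norm ?(n2_ge0 (hK w)) // (ip_norm_sq (hK w)).
Qed.

Lemma cint_pair (F G : forall w, K w) :
  strongly_measurable ipK F -> strongly_measurable ipK G ->
  (\int[mu]_w ((ip_norm (@ipK w) (F w)) ^+ 2)%:E < +oo)%E ->
  (\int[mu]_w ((ip_norm (@ipK w) (G w)) ^+ 2)%:E < +oo)%E ->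
  cintegrable mu (fun w => ipK (F w) (G w)).
Proof.
move=> hF hG iF iG.
have hZ := subsetsU (sm_subsets hK hF) (sm_subsets hK hG).
have iFG := Rint_add (int_n2 hF iF) (int_n2 hG iG).
have F0 w : ~ (supp F `|` supp G) w -> F w = 0.
  by move=> hw; apply/eqP; apply/negPn/negP => h; apply: hw; left.
split.
  apply: (int_le _ iFG).
    apply: (mfun_supp hZ) (0 : R) _ => w hw.
    by rewrite (F0 w hw) (ip0l (hK w)).
  move=> w; apply: le_trans (Re_ip_half (hK w) _ _) _.
  have := n2_ge0 (hK w) (F w); have := n2_ge0 (hK w) (G w); lra.
apply: (int_le _ iFG).
  apply: (mfun_supp hZ) (0 : R) _ => w hw.
  by rewrite (F0 w hw) (ip0l (hK w)).
move=> w; apply: le_trans (Im_ip_half (hK w) _ _) _.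
have := n2_ge0 (hK w) (F w); have := n2_ge0 (hK w) (G w); lra.
Qed.

Lemma cintegrableD (f g : Omega -> C) : cintegrable mu f -> cintegrable mu g ->
  cintegrable mu (fun w => f w + g w).
Proof.
move=> [f1 f2] [g1 g2]; split.
  have := Rint_add f1 g1; apply: eq_integrable => // w _; by rewrite /= cReD.
have := Rint_add f2 g2; apply: eq_integrable => // w _; by rewrite /= cImD.
Qed.

Lemma cintegralD (f g : Omega -> C) : cintegrable mu f -> cintegrable mu g ->
  cintegral mu (fun w => f w + g w) = cintegral mu f + cintegral mu g.
Proof.
move=> [f1 f2] [g1 g2]; apply: ceqP.
  rewrite cReD /cintegral /= -RintegralD //; apply: eq_Rintegral => w _; by rewrite cReD.
rewrite cImD /cintegral /= -RintegralD //; apply: eq_Rintegral => w _; by rewrite cImD.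
Qed.

End Integ.

Lemma sq_le (R : realType) (a b : R) : 0 <= a -> a <= b -> a ^+ 2 <= b ^+ 2.
Proof. by move=> a0 ab; rewrite lerXn2r ?nnegrE // (le_trans a0 ab). Qed.

Lemma bnd_nonneg (R : realType) (V W : lmodType R[i]) (ipV : V -> V -> R[i])
  (ipW : W -> W -> R[i]) (T : V -> W) : bounded_op ipV ipW T ->
  exists M, 0 <= M /\ forall x, ip_norm ipW (T x) <= M * ip_norm ipV x.
Proof.
case=> _ [M hM]; exists (Num.max M 0); split; first by rewrite le_max lexx orbT.
move=> x; apply: le_trans (hM x) _; apply: ler_wpM2r; last by rewrite le_max lexx.
exact: sqrtr_ge0.
Qed.

Section Frames.
Variables (R : realType) (d : measure_display) (Omega : measurableType d).
Variable mu : {measure set Omega -> \bar R}.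
Local Notation C := R[i].
Variable K : Omega -> lmodType C.
Variable ipK : forall w, K w -> K w -> C.
Hypothesis hK : forall w, is_hilbert (@ipK w).
Variable H : lmodType C.
Variable ip : H -> H -> C.
Hypothesis hH : is_hilbert ip.

Definition islin (P : H -> H) := forall a x y, P (a *: x + y) = a *: P x + P y.

Lemma frame_fin (L : forall w, H -> K w) : cgframe mu ipK ip L -> forall a,
  (\int[mu]_w ((ip_norm (@ipK w) (L w a)) ^+ 2)%:E < +oo)%E.
Proof.
case=> _ _ [A [B [_ _ hAB]]] a.
by apply: le_lt_trans (hAB a).2 _; rewrite ltry.
Qed.

Lemma frame_Rint (L : forall w, H -> K w) : cgframe mu ipK ip L -> forall a,
  Rint mu (fun w => n2 (@ipK w) (L w a)).
Proof.
move=> hL a; apply: int_n2 => //; first by case: hL => _ h _; exact: h.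
exact: frame_fin.
Qed.

Lemma frame_eqR (L : forall w, H -> K w) : cgframe mu ipK ip L -> forall a,
  (\int[mu]_w ((ip_norm (@ipK w) (L w a)) ^+ 2)%:E =
    (Rintegral mu setT (fun w => n2 (@ipK w) (L w a)))%:E)%E.
Proof.
move=> hL a; rewrite -int_eq_R; last exact: frame_Rint.
by apply: eq_integral => w _; rewrite (ip_norm_sq (hK w)).
Qed.

Lemma comp_frame (L : forall w, H -> K w) (P : H -> H) (m k : R) :
  cgframe mu ipK ip L -> islin P ->
  (forall f, ip_norm ip (P f) <= m * ip_norm ip f) ->
  (forall f, ip_norm ip f <= k * ip_norm ip (P f)) ->
  cgframe mu ipK ip (fun w f => L w (P f)).
Proof.
move=> hL hP hm hk.
case: hL => hb hms [A [B [A0 AB hAB]]].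
set k' := Num.max k 1.
have k'1 : 1 <= k' by rewrite le_max lexx orbT.
have hk' f : ip_norm ip f <= k' * ip_norm ip (P f).
  apply: le_trans (hk f) _; apply: ler_wpM2r; first exact: ip_norm_ge0.
  by rewrite le_max lexx.
set m' := Num.max m 0.
have m'0 : 0 <= m' by rewrite le_max lexx orbT.
have hm' f : ip_norm ip (P f) <= m' * ip_norm ip f.
  apply: le_trans (hm f) _; apply: ler_wpM2r; first exact: ip_norm_ge0.
  by rewrite le_max lexx.
split.
- move=> w; have [c [c0 hc]] := bnd_nonneg (hb w).
  case: (hb w) => hlin _; split.
    by move=> a x y; rewrite hP hlin.
  exists (c * m') => x; apply: le_trans (hc _) _.
  by rewrite -mulrA ler_wpM2l.
- by move=> f; exact: hms.
have k'0 : 0 < k' ^+ 2 by rewrite exprn_gt0 // (lt_le_trans ltr01).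
exists (A / k' ^+ 2), (Num.max (B * m' ^+ 2) (A / k' ^+ 2)); split.
- by rewrite divr_gt0.
- by rewrite le_max lexx orbT.
move=> f; have [h1 h2] := hAB (P f); split.
  apply: le_trans h1; rewrite lee_fin mulrAC ler_pdivrMr // -mulrA (ler_wpM2l (ltW A0)) //.
  by rewrite -exprMn; apply: sq_le; rewrite ?ip_norm_ge0 // mulrC.
apply: le_trans h2 _; rewrite lee_fin.
have B0 : 0 <= B by apply: le_trans AB; exact: ltW.
apply: le_trans (_ : B * m' ^+ 2 * ip_norm ip f ^+ 2 <= _); last first.
  by rewrite ler_wpM2r ?sqr_ge0 // le_max lexx.
by rewrite -mulrA ler_wpM2l // -exprMn; apply: sq_le; rewrite ?ip_norm_ge0.
Qed.

Lemma sum_frame (L T : forall w, H -> K w) (P1 P2 : H -> H) (m1 m2 k : R) :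
  cgframe mu ipK ip L -> cgframe mu ipK ip T -> strongly_disjoint mu ipK L T ->
  islin P1 -> islin P2 ->
  (forall f, ip_norm ip (P1 f) <= m1 * ip_norm ip f) ->
  (forall f, ip_norm ip (P2 f) <= m2 * ip_norm ip f) ->
  (forall f, ip_norm ip f <= k * ip_norm ip (P1 f)) ->
  cgframe mu ipK ip (fun w f => L w (P1 f) + T w (P2 f)).
Proof.
move=> hL hT hdisj hP1 hP2 hm1 hm2 hk.
have hL' := hL; have hT' := hT.
case: hL => hbL hmsL [A [B [A0 AB hAB]]].
case: hT => hbT hmsT [A2 [B2 [A20 AB2 hAB2]]].
set k' := Num.max k 1.
have k'1 : 1 <= k' by rewrite le_max lexx orbT.
have hk' f : ip_norm ip f <= k' * ip_norm ip (P1 f).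
  apply: le_trans (hk f) _; apply: ler_wpM2r; first exact: ip_norm_ge0.
  by rewrite le_max lexx.
set m1' := Num.max m1 0.
have m1'0 : 0 <= m1' by rewrite le_max lexx orbT.
have hm1' f : ip_norm ip (P1 f) <= m1' * ip_norm ip f.
  apply: le_trans (hm1 f) _; apply: ler_wpM2r; first exact: ip_norm_ge0.
  by rewrite le_max lexx.
set m2' := Num.max m2 0.
have m2'0 : 0 <= m2' by rewrite le_max lexx orbT.
have hm2' f : ip_norm ip (P2 f) <= m2' * ip_norm ip f.
  apply: le_trans (hm2 f) _; apply: ler_wpM2r; first exact: ip_norm_ge0.
  by rewrite le_max lexx.
have B0 : 0 <= B by apply: le_trans AB; exact: ltW.
have B20 : 0 <= B2 by apply: le_trans AB2; exact: ltW.
have key f : (\int[mu]_w ((ip_norm (@ipK w) (L w (P1 f) + T w (P2 f))) ^+ 2)%:E =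
   (Rintegral mu setT (fun w => n2 (@ipK w) (L w (P1 f))) +
    Rintegral mu setT (fun w => n2 (@ipK w) (T w (P2 f))))%:E)%E.
  have iu := frame_Rint hL' (P1 f).
  have iv := frame_Rint hT' (P2 f).
  have [cu _] := cint_pair hK (hmsL (P1 f)) (hmsT (P2 f))
     (frame_fin hL' (P1 f)) (frame_fin hT' (P2 f)).
  have i2 := Rint_scale 2 cu.
  rewrite (eq_integral (fun w => (n2 (@ipK w) (L w (P1 f)) + n2 (@ipK w) (T w (P2 f)) +
      2 * complex.Re (ipK (L w (P1 f)) (T w (P2 f))))%:E)); last first.
    by move=> w _; rewrite (ip_norm_sq (hK w)) (n2D (hK w)).
  rewrite int_eq_R; last by apply: Rint_add => //; exact: Rint_add.
  rewrite RintegralD //; last exact: Rint_add.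
  rewrite RintegralD // RintegralZl //.
  have := hdisj (P1 f) (P2 f); rewrite /khat_ip /cintegral.
  move=> /(congr1 (@complex.Re R)) /= ->.
  by rewrite mulr0 addr0.
have k'0 : 0 < k' ^+ 2 by rewrite exprn_gt0 // (lt_le_trans ltr01).
split.
- move=> w; have [c [c0 hc]] := bnd_nonneg (hbL w).
  have [c2 [c20 hc2]] := bnd_nonneg (hbT w).
  case: (hbL w) => hlin _; case: (hbT w) => hlin2 _; split.
    move=> a x y; rewrite hP1 hP2 hlin hlin2 scalerDr.
    by rewrite -!addrA; congr (_ + _); rewrite addrCA.
  exists (c * m1' + c2 * m2') => x.
  apply: le_trans (ip_normD (hK w) _ _) _.
  rewrite mulrDl; apply: lerD.
    by apply: le_trans (hc _) _; rewrite -mulrA ler_wpM2l.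
  by apply: le_trans (hc2 _) _; rewrite -mulrA ler_wpM2l.
- by move=> f; apply: sm_add.
exists (A / k' ^+ 2), (Num.max (B * m1' ^+ 2 + B2 * m2' ^+ 2) (A / k' ^+ 2)); split.
- by rewrite divr_gt0.
- by rewrite le_max lexx orbT.
move=> f; rewrite key.
have [h1 h2] := hAB (P1 f).
have [h3 h4] := hAB2 (P2 f).
rewrite (frame_eqR hL') lee_fin in h1 h2.
rewrite (frame_eqR hT') lee_fin in h3 h4.
have I20 : 0 <= Rintegral mu setT (fun w => n2 (@ipK w) (T w (P2 f))).
  by apply: Rintegral_ge0 => w _; exact: n2_ge0.
split; rewrite lee_fin.
  apply: le_trans (_ : A * ip_norm ip (P1 f) ^+ 2 <= _); last first.
    by apply: le_trans h1 _; rewrite lerDl.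
  rewrite mulrAC ler_pdivrMr // -mulrA (ler_wpM2l (ltW A0)) //.
  by rewrite -exprMn; apply: sq_le; rewrite ?ip_norm_ge0 // mulrC.
apply: le_trans (_ : (B * m1' ^+ 2 + B2 * m2' ^+ 2) * ip_norm ip f ^+ 2 <= _); last first.
  by rewrite ler_wpM2r ?sqr_ge0 // le_max lexx.
rewrite mulrDl; apply: lerD; rewrite ?lee_fin in h2 h4.
  apply: le_trans h2 _; by rewrite -mulrA ler_wpM2l // -exprMn; apply: sq_le; rewrite ?ip_norm_ge0.
apply: le_trans h4 _; by rewrite -mulrA ler_wpM2l // -exprMn; apply: sq_le; rewrite ?ip_norm_ge0.
Qed.

End Frames.

Lemma div_norm (R : realType) (a b c : R) : 0 <= a -> 0 <= b -> 0 <= c ->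
  a ^+ 2 <= c * b * a -> a <= c * b.
Proof.
move=> a0 b0 c0 h; have [->|an0] := eqVneq a 0; first by rewrite mulr_ge0.
have ap : 0 < a by rewrite lt_neqAle eq_sym an0.
by rewrite -(ler_pM2r ap) -expr2.
Qed.

Section Adj.
Variable R : realType.
Local Notation C := R[i].
Variable H : lmodType C.
Variable ip : H -> H -> C.
Hypothesis hH : is_hilbert ip.

Lemma adj_lin (T Ts : H -> H) : is_adjoint ip ip T Ts -> islin Ts.
Proof.
move=> hT a y y'; apply: (ip_inj hH) => x.
by rewrite -hT (ipDr hH) (ipZr hH) (ipDr hH) (ipZr hH) -!hT.
Qed.

Lemma adj_bnd (T Ts : H -> H) (m : R) : is_adjoint ip ip T Ts -> 0 <= m ->
  (forall x, ip_norm ip (T x) <= m * ip_norm ip x) ->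
  forall y, ip_norm ip (Ts y) <= m * ip_norm ip y.
Proof.
move=> hT m0 hm y; apply: div_norm; rewrite ?ip_norm_ge0 //.
rewrite (ip_norm_sq hH) /n2 -hT; apply: le_trans (CS_Re hH _ _) _.
rewrite mulrAC; apply: ler_wpM2r; first exact: ip_norm_ge0.
exact: hm.
Qed.

End Adj.

End Helpers.
Import Helpers.
Import Order.TTheory.
Unset Implicit Arguments.
Set Strict Implicit.

Theorem proposition2p11
  (R : realType) (d : measure_display) (Omega : measurableType d)
  (mu : {measure set Omega -> \bar R})
  (H : lmodType R[i]) (ip : H -> H -> R[i])
  (K : Omega -> lmodType R[i]) (ipK : forall w, K w -> K w -> R[i])
  (hH : is_hilbert ip) (hK : forall w, is_hilbert (@ipK w))
  (Lam Th : forall w, H -> K w)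
  (hLam : cgframe mu ipK ip Lam) (hTh : cgframe mu ipK ip Th)
  (hdisj : strongly_disjoint mu ipK Lam Th)
  (S Sinv : H -> H) (hS : frame_operator mu ipK ip Lam S)
  (hSinv1 : forall f, S (Sinv f) = f) (hSinv2 : forall f, Sinv (S f) = f)
  (L1 L2 L1s L2s L1dag : H -> H)
  (hL1 : bounded_op ip ip L1) (hL2 : bounded_op ip ip L2)
  (hL1s : is_adjoint ip ip L1 L1s) (hL2s : is_adjoint ip ip L2 L2s)
  (hL1surj : forall g, exists f, L1 f = g)
  (hL1dag : bounded_op ip ip L1dag) (hL1L1dag : forall f, L1 (L1dag f) = f) :
  cg_dual mu ipK ip (fun w f => Lam w (Sinv (L1dag f))) (fun w f => Lam w (L1s f)) /\
  cg_dual mu ipK ip (fun w f => Lam w (Sinv (L1dag f)))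
                    (fun w f => Lam w (L1s f) + Th w (L2s f)).
Proof.
have hLam' := hLam.
case: hLam => hLb hLms [A [B [A0 AB hAB]]].
have hLs : forall w, exists Ls : K w -> H, forall y x, ipK w (Lam w x) y = ip x (Ls y).
  move=> w; have [c [c0 hc]] := bnd_nonneg (hLb w).
  case: (hLb w) => hlin _.
  have : forall y : K w, exists z, forall x, ipK w (Lam w x) y = ip x z.
    move=> y; apply: (@riesz _ _ _ hH _ (c * ip_norm (@ipK w) y)).
      by move=> a x x'; rewrite hlin (ipDl (hK w)) (ipZl (hK w)).
    move=> x; apply: le_trans (CS_Re (hK w) _ _) _.
    by rewrite mulrAC ler_wpM2r ?ip_norm_ge0.
  by move=> /choice [f hf]; exists f => y x; exact: hf.
pose Ls := fun w => projT1 (cid (hLs w)).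
have hLsP : forall w, is_adjoint ip (@ipK w) (Lam w) (Ls w).
  by move=> w x y; exact: (projT2 (cid (hLs w)) y x).
case: hS => hSb hSP.
have Sip a b : ip (S a) b = cintegral mu (fun w => ipK w (Lam w a) (Lam w b)).
  rewrite (hSP Ls hLsP a b); congr cintegral; apply: funext => w.
  by rewrite hLsP.
have SRe a : A * ip_norm ip a ^+ 2 <= complex.Re (ip (S a) a).
  rewrite Sip /cintegral /=.
  have h := (hAB a).1; rewrite (frame_eqR hK hLam' a) lee_fin in h.
  exact: h.
have Sinj x y : S x = S y -> x = y by move=> h; rewrite -(hSinv2 x) h hSinv2.
case: (hSb) => hSlin _.
have Sinvlin : islin Sinv.
  by move=> a x y; apply: Sinj; rewrite hSlin !hSinv1.
have Sinvb y : ip_norm ip (Sinv y) <= A^-1 * ip_norm ip y.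
  apply: div_norm; rewrite ?ip_norm_ge0 ?invr_ge0 ?(ltW A0) //.
  rewrite -mulrA ler_pdivlMl //.
  have := SRe (Sinv y); rewrite hSinv1; move=> h; apply: le_trans h _.
  exact: CS_Re.
have [m1 [m10 hm1]] := bnd_nonneg hL1.
have [m2 [m20 hm2]] := bnd_nonneg hL2.
have [md [md0 hmd]] := bnd_nonneg hL1dag.
have [mS [mS0 hmS]] := bnd_nonneg hSb.
have L1slin := adj_lin hH hL1s.
have L2slin := adj_lin hH hL2s.
have L1sb := adj_bnd hH hL1s m10 hm1.
have L2sb := adj_bnd hH hL2s m20 hm2.
have L1slow f : ip_norm ip f <= md * ip_norm ip (L1s f).
  apply: div_norm; rewrite ?ip_norm_ge0 //.
  rewrite (ip_norm_sq hH) /n2 -{1}(hL1L1dag f) hL1s.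
  apply: le_trans (CS_Re hH _ _) _; rewrite mulrAC ler_wpM2r ?ip_norm_ge0 //.
have L1dlin : islin L1dag by case: hL1dag.
pose M := fun f => Sinv (L1dag f).
have Mlin : islin M by move=> a x y; rewrite /M L1dlin Sinvlin.
have Mb f : ip_norm ip (M f) <= (A^-1 * md) * ip_norm ip f.
  apply: le_trans (Sinvb _) _; rewrite -mulrA ler_wpM2l ?invr_ge0 ?(ltW A0) //.
have Mlow f : ip_norm ip f <= (m1 * mS) * ip_norm ip (M f).
  rewrite -{1}(hL1L1dag f) -(hSinv1 (L1dag f)) -mulrA.
  apply: le_trans (hm1 _) _; rewrite ler_wpM2l //.
have hT : cgframe mu ipK ip (fun w f => Lam w (Sinv (L1dag f))).
  exact: (comp_frame hLam' Mlin Mb Mlow).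
have hF1 : cgframe mu ipK ip (fun w f => Lam w (L1s f)).
  exact: (comp_frame hLam' L1slin L1sb L1slow).
have hF2 : cgframe mu ipK ip (fun w f => Lam w (L1s f) + Th w (L2s f)).
  exact: (sum_frame hK hLam' hTh hdisj L1slin L2slin L1sb L2sb L1slow).
have pairLL a b : cintegrable mu (fun w => ipK w (Lam w a) (Lam w b)).
  exact: (cint_pair hK (hLms a) (hLms b) (frame_fin hLam' a) (frame_fin hLam' b)).
have pairLT a b : cintegrable mu (fun w => ipK w (Lam w a) (Th w b)).
  have hThm : strongly_measurable ipK (fun w => Th w b) by case: hTh => _ h _; exact: h.
  exact: (cint_pair hK (hLms a) hThm (frame_fin hLam' a) (frame_fin hTh b)).
have main1 f g : ip f g = cintegral mu (fun w => ipK w (Lam w (M f)) (Lam w (L1s g))).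
  by rewrite -Sip /M hSinv1 -hL1s hL1L1dag.
split; split => // Ts hTs f g.
  have -> : (fun w => ip f (Ts w (Lam w (L1s g)))) =
            (fun w => ipK w (Lam w (M f)) (Lam w (L1s g))).
    by apply: funext => w; rewrite hTs.
  by split; [exact: pairLL | exact: main1].
have -> : (fun w => ip f (Ts w (Lam w (L1s g) + Th w (L2s g)))) =
          (fun w => ipK w (Lam w (M f)) (Lam w (L1s g)) + ipK w (Lam w (M f)) (Th w (L2s g))).
  by apply: funext => w; rewrite -hTs (ipDr (hK w)).
split; first exact: cintegrableD.
rewrite cintegralD // main1.
have := hdisj (M f) (L2s g); rewrite /khat_ip => ->.
by rewrite addr0.
Qed.
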